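(* Let $G$ be a graph, $\ell$ a non-negative integer, and let $G'$ be the graph constructed from $G$ as described in the context. If $(G,\ell)$ is a Yes-instance of \textsc{Edge Induced Forest}, then $(G',4\ell,3\ell)$ is a Yes-instance of \textsc{Contraction(vc)}.
   Context: All graphs are finite, simple and undirected. Construction of $G'$ from $G$: for every vertex $u\in V(G)$ add two vertices $z_u,p_u$ and the edge $z_up_u$. For every edge $uv\in E(G)$ add seven vertices $y^a_{uv},y^b_{uv},y^c_{uv},w^1_{uv},w^2_{uv},p^1_{uv},p^2_{uv}$ and the edges $z_uy^c_{uv}$, $z_vy^c_{uv}$, $y^a_{uv}y^b_{uv}$, $y^a_{uv}y^c_{uv}$, $y^b_{uv}w^1_{uv}$, $y^b_{uv}w^2_{uv}$, $w^1_{uv}p^1_{uv}$, $w^2_{uv}p^2_{uv}$. No other vertices or edges. \textsc{Edge Induced Forest}: given $(G,\ell)$, decide whether there is a set $F$ of at least $\ell$ edges with $G[V(F)]$ a forest, where $V(F)$ is the set of endpoints of $F$. $\mathrm{vc}(H)$ is the minimum size of a vertex cover of $H$; $H/F$ denotes the graph obtained by contracting the edges of $F$ (contracting $uv$ deletes $u,v$ and adds a new vertex adjacent to $(N(u)\cup N(v))\setminus\{u,v\}$, without loops or parallel edges). $(H,k,d)$ is a Yes-instance of \textsc{Contraction(vc)} iff there exists $F\subseteq E(H)$ with $|F|\le k$ and $\mathrm{vc}(H/F)\le\mathrm{vc}(H)-d$. *)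

(* Defs.v *)
(* Graphs are given as (V, E) over a finType T:
   V : {set T} is the vertex set, E : {set {set T}} the edge set,
   each edge being a 2-element subset of V. *)
From mathcomp Require Import all_boot.
Set Implicit Arguments. Unset Strict Implicit. Unset Printing Implicit Defensive.

Definition adj (T : finType) (E : {set {set T}}) : rel T :=
  fun x y => [set x; y] \in E.

Definition is_vcover (T : finType) (V : {set T}) (E : {set {set T}})
  (S : {set T}) : bool :=
  (S \subset V) && [forall e in E, e :&: S != set0].

Definition vc (T : finType) (V : {set T}) (E : {set {set T}}) : nat :=
  \big[minn/#|V|]_(S : {set T} | is_vcover V E S) #|S|.

Definition forest (T : finType) (V : {set T}) (E : {set {set T}}) : Prop :=
  ~ exists s : seq T,
      [/\ uniq s, 2 < size s, all (fun x => x \in V) s & cycle (adj E) s].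

Definition induced_E (T : finType) (W : {set T}) (E : {set {set T}}) :=
  [set e in E | e \subset W].

Definition VF (T : finType) (F : {set {set T}}) : {set T} := \bigcup_(e in F) e.

Definition edge_induced_forest (T : finType) (E : {set {set T}}) (l : nat) : Prop :=
  exists F : {set {set T}},
    [/\ F \subset E, l <= #|F| & forest (VF F) (induced_E (VF F) E)].

(* Contraction of an edge set F in H = (V,E): vertices of H/F are the
   connected components of (V, F); two distinct components are adjacent
   iff some edge of H joins them. *)
Definition comp (T : finType) (V : {set T}) (F : {set {set T}}) (x : T) : {set T} :=
  [set y in V | connect (adj F) x y].

Definition contr_V (T : finType) (V : {set T}) (F : {set {set T}}) : {set {set T}} :=
  [set comp V F x | x in V].

Definition contr_E (T : finType) (V : {set T}) (E F : {set {set T}})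
  : {set {set {set T}}} :=
  [set [set C; D] | C in contr_V V F, D in contr_V V F &
     (C != D) && [exists x in C, exists y in D, [set x; y] \in E]].

(* (H, k, d) is a Yes-instance of Contraction(vc); the inequality
   vc(H/F) <= vc(H) - d is stated over the integers as vc(H/F) + d <= vc(H). *)
Definition contraction_vc (T : finType) (V : {set T}) (E : {set {set T}})
  (k d : nat) : Prop :=
  exists F : {set {set T}},
    [/\ F \subset E, #|F| <= k & vc (contr_V V F) (contr_E V E F) + d <= vc V E].

Definition gvert (T : finType) := ((T * 'I_2) + ({set T} * 'I_7))%type.

Definition gz (T : finType) (u : T) : gvert T := inl (u, @inord 1 0).
Definition gp (T : finType) (u : T) : gvert T := inl (u, @inord 1 1).
Definition gya (T : finType) (e : {set T}) : gvert T := inr (e, @inord 6 0).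
Definition gyb (T : finType) (e : {set T}) : gvert T := inr (e, @inord 6 1).
Definition gyc (T : finType) (e : {set T}) : gvert T := inr (e, @inord 6 2).
Definition gw1 (T : finType) (e : {set T}) : gvert T := inr (e, @inord 6 3).
Definition gw2 (T : finType) (e : {set T}) : gvert T := inr (e, @inord 6 4).
Definition gp1 (T : finType) (e : {set T}) : gvert T := inr (e, @inord 6 5).
Definition gp2 (T : finType) (e : {set T}) : gvert T := inr (e, @inord 6 6).

Definition Gp_V (T : finType) (E : {set {set T}}) : {set gvert T} :=
  [set v : gvert T | match v with inl _ => true | inr (e, _) => e \in E end].

Definition Gp_E (T : finType) (E : {set {set T}}) : {set {set gvert T}} :=
  [set [set gz u; gp u] | u : T] :|:
  \bigcup_(e in E)
    ([set [set gz u; gyc e] | u in e] :|: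
     [set [set gya e; gyb e]; [set gya e; gyc e];
          [set gyb e; gw1 e]; [set gyb e; gw2 e];
          [set gw1 e; gp1 e]; [set gw2 e; gp2 e]]).

(* Main.v *)
Require Import Defs.
From mathcomp Require Import all_boot zify.
Require Import Defs.
Set Implicit Arguments. Unset Strict Implicit. Unset Printing Implicit Defensive.

Lemma bigmin_le (I : finType) (P : pred I) (F : I -> nat) x0 j :
  P j -> \big[minn/x0]_(i | P i) F i <= F j.
Proof.
move=> Pj; rewrite -big_filter.
have: j \in [seq i <- index_enum I | P i] by rewrite mem_filter Pj mem_index_enum.
elim: (filter _ _) => //= a s IH.
rewrite in_cons big_cons => /orP [/eqP-> | /IH H]; first exact: geq_minl.
exact: leq_trans (geq_minr _ _) H.
Qed.

Lemma adjC (T : finType) (E : {set {set T}}) x y : adj E x y = adj E y x.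
Proof. by rewrite /adj setUC. Qed.

Lemma adj_sym (T : finType) (E : {set {set T}}) : connect_sym (adj E).
Proof. apply: sym_connect_sym => x y; exact: adjC. Qed.

Lemma comp_eq (T : finType) (V : {set T}) (F : {set {set T}}) x y :
  connect (adj F) x y -> comp V F x = comp V F y.
Proof.
move=> cxy; apply/setP => z; rewrite !inE; congr andb; apply/idP/idP => H.
  by apply: connect_trans H; rewrite adj_sym.
exact: connect_trans cxy H.
Qed.

Lemma comp_adj (T : finType) (V : {set T}) (F : {set {set T}}) x y :
  [set x; y] \in F -> comp V F x = comp V F y.
Proof. by move=> H; apply: comp_eq; apply: connect1. Qed.

Lemma hit2 (T : finType) (S : {set T}) a b :
  [set a; b] :&: S != set0 -> (a \in S) || (b \in S).
Proof.
case/set0Pn => x; rewrite inE => /andP [/set2P [] -> ->] //; by rewrite orbT.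
Qed.

Lemma hitl (T : finType) (S : {set T}) a b : a \in S -> [set a; b] :&: S != set0.
Proof. by move=> aS; apply/set0Pn; exists a; rewrite inE set21. Qed.
Lemma hitr (T : finType) (S : {set T}) a b : b \in S -> [set a; b] :&: S != set0.
Proof. by move=> bS; apply/set0Pn; exists b; rewrite inE set22. Qed.

Lemma vc_le (T : finType) (V : {set T}) (E : {set {set T}}) S :
  is_vcover V E S -> vc V E <= #|S|.
Proof. move=> H; rewrite /vc; exact: (bigmin_le (fun S : {set T} => #|S|) _ H). Qed.

Lemma vc_ge (T : finType) (V : {set T}) (E : {set {set T}}) N :
  N <= #|V| -> (forall S, is_vcover V E S -> N <= #|S|) -> N <= vc V E.
Proof.
move=> HV HS; rewrite /vc; apply: (big_ind (fun x => N <= x)) => //.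
by move=> x y Hx Hy; rewrite leq_min Hx Hy.
Qed.

Lemma contr_cover (T : finType) (V : {set T}) (E F : {set {set T}}) S :
  is_vcover V E S -> is_vcover (contr_V V F) (contr_E V E F) (comp V F @: S).
Proof.
case/andP => SV /forall_inP HS; apply/andP; split.
  by apply: imsetS.
apply/forall_inP => e /imset2P [C D CV]; rewrite inE => /andP [DV /andP [_ Hx]] ->.
case/exists_inP: Hx => x xC /exists_inP [y yD xyE].
have compC : forall C z, C \in contr_V V F -> z \in C -> comp V F z = C.
  move=> C0 z /imsetP [w wV ->]; rewrite inE => /andP [_ cwz].
  by rewrite (comp_eq V cwz).
case/orP: (hit2 (HS _ xyE)) => [xS | yS].
  by apply: hitl; rewrite -(compC C x) // imset_f.
by apply: hitr; rewrite -(compC D y) // imset_f.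
Qed.

Lemma card_bigcup_le (I T : finType) (A : {set I}) (B : I -> {set T}) :
  #|\bigcup_(i in A) B i| <= \sum_(i in A) #|B i|.
Proof.
apply: (@big_ind2 _ _ (fun (X : {set T}) n => #|X| <= n)) => //; first by rewrite cards0.
move=> X1 n1 X2 n2 H1 H2; apply: leq_trans (leq_card_setU X1 X2).1 _.
exact: leq_add.
Qed.

Lemma ex_subset_card (T : finType) (A : {set T}) n :
  n <= #|A| -> exists B : {set T}, B \subset A /\ #|B| = n.
Proof.
move=> Hn; move Hk: (#|A| - n) => k; elim: k A Hk Hn => [|k IH] A Hk Hn.
  by exists A; split => //; lia.
have: 0 < #|A| by lia.
case/card_gt0P => a aA.
have Ha : #|A| = (#|A :\ a|).+1 by rewrite (cardsD1 a A) aA.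
case: (IH (A :\ a)) => [||B [BA HB]]; try lia.
by exists B; split => //; apply: subset_trans BA (subsetDl _ _).
Qed.

Definition acyc (T : finType) (F : {set {set T}}) :=
  forall u v, [set u; v] \in F -> u != v -> ~~ connect (adj (F :\ [set u; v])) u v.

Lemma connect_mono (T : finType) (F1 F : {set {set T}}) :
  F1 \subset F -> subrel (connect (adj F1)) (connect (adj F)).
Proof.
move=> sF; apply: connect_sub => x y Hxy; apply: connect1.
exact: (subsetP sF).
Qed.

Lemma acyc_sub (T : finType) (F1 F : {set {set T}}) :
  F1 \subset F -> acyc F -> acyc F1.
Proof.
move=> sF HF u v uv1 nuv; apply/negP => C.
have := HF u v (subsetP sF _ uv1) nuv; move/negP; apply.
apply: connect_mono C; exact: setSD.
Qed.

Lemma forest_count (T : finType) (F : {set {set T}}) :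
  (forall e, e \in F -> #|e| = 2) -> acyc F ->
  forall (X : finType) (g : T -> X), (forall u v, [set u; v] \in F -> g u = g v) ->
  #|g @: [set: T]| + #|F| <= #|T|.
Proof.
move Hk: #|F| => k; elim: k F Hk => [|k IH] F Hk HE HA X g Hg.
  by rewrite addn0 -cardsT; apply: leq_imset_card.
have: 0 < #|F| by rewrite Hk.
case/card_gt0P => e eF.
have /eqP/cards2P [u [v [nuv De]]] := HE e eF; subst e.
set F0 := F :\ [set u; v].
have HF0 : #|F0| = k by move: Hk; rewrite (cardsD1 [set u; v] F) eF add1n => [[]].
have sF0 : F0 \subset F by exact: subsetDl.
have nc := HA u v eF nuv.
pose g' := fun x => (g x, connect (adj F0) u x).
have Hg' : forall a b, [set a; b] \in F0 -> g' a = g' b.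
  move=> a b abF0; rewrite /g' (Hg a b (subsetP sF0 _ abF0)); congr pair.
  apply/idP/idP => H.
    by apply: connect_trans H (connect1 _).
  by apply: connect_trans H (connect1 _); rewrite adjC.
have IHg := IH F0 HF0 (fun e eF0 => HE e (subsetP sF0 _ eF0)) (acyc_sub sF0 HA) _ g' Hg'.
have Himg : g @: [set: T] = fst @: (g' @: [set: T]).
  by rewrite -imset_comp.
have Hlt : #|g @: [set: T]| < #|g' @: [set: T]|.
  rewrite Himg ltn_neqAle leq_imset_card andbT.
  apply/negP => /imset_injP Hinj.
  have Hu : g' u \in g' @: [set: T] by rewrite imset_f.
  have Hv : g' v \in g' @: [set: T] by rewrite imset_f.
  have := Hinj _ _ Hu Hv; rewrite /g' /= (Hg u v eF) => /(_ erefl) [].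
  by rewrite connect0 => /esym; apply/negP.
lia.
Qed.

Lemma in_VF (T : finType) (F : {set {set T}}) e x : e \in F -> x \in e -> x \in VF F.
Proof. by move=> eF xe; apply/bigcupP; exists e. Qed.

Lemma path_VF (T : finType) (F : {set {set T}}) y p :
  path (adj F) y p -> all (fun x => x \in VF F) p.
Proof.
elim: p y => //= x p IH y /andP [Hyx Hp]; rewrite (IH x) // andbT.
by apply: (in_VF Hyx); rewrite set22.
Qed.

Lemma forest_acyc (T : finType) (E F : {set {set T}}) :
  F \subset E -> forest (VF F) (induced_E (VF F) E) -> acyc F.
Proof.
move=> sFE Hf u v uvF nuv; apply/negP => /connectP [p pth lastp].
move: lastp; case/shortenP: pth => p' pth' up' _ lastp'.
have sF0 : F :\ [set u; v] \subset F by exact: subsetDl.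
have sub1 : subrel (adj (F :\ [set u; v])) (adj (induced_E (VF F) E)).
  move=> a b Hab; rewrite /adj /induced_E inE.
  have abF := subsetP sF0 _ Hab.
  rewrite (subsetP sFE _ abF) /=; apply/subsetP => z; exact: in_VF.
apply: Hf; exists (u :: p'); split => //.
- case: p' pth' up' lastp' => [|w [|w' q]] //= pth' _ lastp'.
    by move: nuv; rewrite lastp' eqxx.
  by move: pth'; rewrite andbT -lastp' /adj !inE eqxx.
- apply/andP; split; first exact: (in_VF uvF (set21 u v)).
  exact: (path_VF (sub_path (fun a b (H : adj (F :\ [set u; v]) a b) => subsetP sF0 _ H) pth')).
- rewrite /cycle rcons_path (sub_path sub1 pth') /= -lastp'.
  rewrite /adj /induced_E inE setUC (subsetP sFE _ uvF) /=.
  apply/subsetP => z; exact: in_VF.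
Qed.

Definition kf (n : nat) : nat :=
  match n with 0 | 1 => 0 | 3 | 5 => 1 | _ => 2 end.

Definition key (T : finType) (x : gvert T) : option (T + ({set T} * 'I_3)) :=
  match x with
  | inl (u, _) => Some (inl u)
  | inr (e, i) => Some (inr (e, inord (kf (val i))))
  end.

Lemma LB (T : finType) (E : {set {set T}}) (S : {set gvert T}) :
  (forall u, [set gz u; gp u] :&: S != set0) ->
  (forall e, e \in E -> [/\ [set gya e; gyb e] :&: S != set0,
                         [set gw1 e; gp1 e] :&: S != set0 &
                         [set gw2 e; gp2 e] :&: S != set0]) ->
  #|T| + 3 * #|E| <= #|S|.
Proof.
move=> HZ HG.
pose D : {set option (T + ({set T} * 'I_3))} :=
  Some @: (inl @: [set: T] :|: inr @: setX E [set: 'I_3]).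
have cD : #|D| = #|T| + 3 * #|E|.
  rewrite card_imset; last by move=> a b [].
  rewrite cardsU.
  have -> : (inl @: [set: T]) :&: (inr @: setX E [set: 'I_3]) = set0.
    apply/setP => x; rewrite !inE; apply/negP => /andP [/imsetP [a _ ->] /imsetP [b _]] //.
  rewrite cards0 subn0 !card_imset; try by move=> a b [].
  rewrite cardsX !cardsT card_ord; lia.
rewrite -cD; apply: leq_trans (leq_imset_card (@key T) S).
apply/subset_leq_card/subsetP => x /imsetP [y]; rewrite inE => /orP [] /imsetP [z zin ->] ->.
  case/orP: (hit2 (HZ z)) => H; apply/imsetP; [exists (gz z) | exists (gp z)] => //.
case: z zin => e j; rewrite inE /= => /andP [eE _].
case: (HG e eE) => H1 H2 H3.
have kv : forall (y : gvert T) k, y \in S -> (exists i : 'I_7, y = inr (e, i) /\ kf i = k) ->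
   Some (inr (e, inord k)) \in (@key T) @: S.
  move=> y0 k yS [i [Ey <-]]; subst y0; by apply/imsetP; exists (inr (e, i)).
case: j => [[|[|[|k]]] Hk] //.
- have -> : Ordinal Hk = inord 0 by apply/val_inj; rewrite /= inordK.
  case/orP: (hit2 H1) => H; apply: kv H _.
    by exists (inord 0); rewrite inordK.
  by exists (inord 1); rewrite inordK.
- have -> : Ordinal Hk = inord 1 by apply/val_inj; rewrite /= inordK.
  case/orP: (hit2 H2) => H; apply: kv H _.
    by exists (inord 3); rewrite inordK.
  by exists (inord 5); rewrite inordK.
- have -> : Ordinal Hk = inord 2 by apply/val_inj; rewrite /= inordK.
  case/orP: (hit2 H3) => H; apply: kv H _.
    by exists (inord 4); rewrite inordK.
  by exists (inord 6); rewrite inordK.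
Qed.

Lemma Gp_E_zp (T : finType) (E : {set {set T}}) u : [set gz u; gp u] \in Gp_E E.
Proof. by rewrite /Gp_E inE; apply/orP; left; apply/imsetP; exists u. Qed.

Lemma Gp_E_gad (T : finType) (E : {set {set T}}) e x : e \in E ->
  x \in [set [set gya e; gyb e]; [set gya e; gyc e];
          [set gyb e; gw1 e]; [set gyb e; gw2 e];
          [set gw1 e; gp1 e]; [set gw2 e; gp2 e]] -> x \in Gp_E E.
Proof.
move=> eE xin; rewrite /Gp_E inE; apply/orP; right; apply/bigcupP; exists e => //.
by rewrite inE xin orbT.
Qed.

Lemma Gp_E_zc (T : finType) (E : {set {set T}}) e u : e \in E -> u \in e ->
  [set gz u; gyc e] \in Gp_E E.
Proof.
move=> eE ue; rewrite /Gp_E inE; apply/orP; right; apply/bigcupP; exists e => //.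
by rewrite inE; apply/orP; left; apply/imsetP; exists u.
Qed.

Lemma vcGp (T : finType) (E : {set {set T}}) : #|T| + 3 * #|E| <= vc (Gp_V E) (Gp_E E).
Proof.
apply: vc_ge.
  apply: LB => [u|e eE].
    by apply: hitl; rewrite /Gp_V inE.
  by split; apply: hitl; rewrite /Gp_V inE.
move=> S /andP [_ /forall_inP HS]; apply: LB => [u|e eE].
  exact: HS (Gp_E_zp E u).
by split; apply: HS; apply: (Gp_E_gad eE); rewrite !inE eqxx ?orbT.
Qed.

Lemma cardU_le (T : finType) (A B : {set T}) : #|A :|: B| <= #|A| + #|B|.
Proof. exact: (leq_card_setU A B).1. Qed.

Section Main.
Variables (T : finType) (E F1 : {set {set T}}).
Hypothesis HE : forall e, e \in E -> #|e| = 2.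
Hypothesis sF1 : F1 \subset E.
Hypothesis aF1 : acyc F1.

Definition Fc : {set {set gvert T}} :=
  (\bigcup_(e in F1) [set [set gz u; gyc e] | u in e]) :|:
  [set [set gyb e; gw1 e] | e in F1] :|: [set [set gyb e; gw2 e] | e in F1].

Definition S0 : {set gvert T} :=
  (@gz T) @: [set: T] :|: (@gw1 T) @: E :|: (@gw2 T) @: E :|:
  (@gya T) @: (E :\: F1) :|: (@gyb T) @: F1 :|: (@gyc T) @: F1.

Lemma Fc_sub : Fc \subset Gp_E E.
Proof.
apply/subsetP => x H; rewrite /Fc in H.
case/setUP: H => [/setUP [/bigcupP [e eF /imsetP [u ue ->]] | /imsetP [e eF ->]] | /imsetP [e eF ->]].
- exact: Gp_E_zc (subsetP sF1 _ eF) ue.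
- by apply: (Gp_E_gad (subsetP sF1 _ eF)); rewrite !inE eqxx ?orbT.
- by apply: (Gp_E_gad (subsetP sF1 _ eF)); rewrite !inE eqxx ?orbT.
Qed.

Lemma Fc_card : #|Fc| <= 4 * #|F1|.
Proof.
apply: leq_trans (cardU_le _ _) _.
have H1 : #|\bigcup_(e in F1) [set [set gz u; gyc e] | u in e]| <= 2 * #|F1|.
  apply: leq_trans (card_bigcup_le _ _) _.
  rewrite mulnC -sum_nat_const; apply: leq_sum => e eF.
  by apply: leq_trans (leq_imset_card _ _) _; rewrite (HE (subsetP sF1 _ eF)).
have H2 : #|[set [set gyb e; gw1 e] | e in F1]| <= #|F1| := leq_imset_card _ _.
have H3 : #|[set [set gyb e; gw2 e] | e in F1]| <= #|F1| := leq_imset_card _ _.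
have H4 := cardU_le (\bigcup_(e in F1) [set [set gz u; gyc e] | u in e])
  [set [set gyb e; gw1 e] | e in F1].
apply: leq_trans (leq_add (leq_trans H4 (leq_add H1 H2)) H3) _; lia.
Qed.

Lemma mz u : gz u \in S0.
Proof. by rewrite /S0 !in_setU (imset_f (@gz T) (in_setT u)). Qed.
Lemma mw1 e : e \in E -> gw1 e \in S0.
Proof. by move=> eE; rewrite /S0 !in_setU (imset_f (@gw1 T) eE) ?orbT. Qed.
Lemma mw2 e : e \in E -> gw2 e \in S0.
Proof. by move=> eE; rewrite /S0 !in_setU (imset_f (@gw2 T) eE) ?orbT. Qed.
Lemma mya e : e \in E -> e \notin F1 -> gya e \in S0.
Proof.
move=> eE eF; have H : e \in E :\: F1 by rewrite inE eF.
by rewrite /S0 !in_setU (imset_f (@gya T) H) ?orbT.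
Qed.
Lemma myb e : e \in F1 -> gyb e \in S0.
Proof. by move=> eF; rewrite /S0 !in_setU (imset_f (@gyb T) eF) ?orbT. Qed.
Lemma myc e : e \in F1 -> gyc e \in S0.
Proof. by move=> eF; rewrite /S0 !in_setU (imset_f (@gyc T) eF) ?orbT. Qed.

Lemma S0_cover : is_vcover (Gp_V E) (Gp_E E) S0.
Proof.
apply/andP; split.
  apply/subsetP => x; rewrite /S0 !in_setU.
  move=> /orP [/orP [/orP [/orP [/orP [] | ] | ] | ] | ] /imsetP [e He ->];
    rewrite /Gp_V inE //=.
  - by move: He; rewrite inE => /andP [].
  - exact: subsetP sF1 _ He.
  - exact: subsetP sF1 _ He.
apply/forall_inP => x; rewrite /Gp_E inE => /orP [/imsetP [u _ ->] | ].
  exact/hitl/mz.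
case/bigcupP => e eE; rewrite inE => /orP [/imsetP [u _ ->] | ].
  exact/hitl/mz.
rewrite !inE => /orP [/orP [/orP [/orP [/orP [/eqP-> | /eqP->] | /eqP->] | /eqP->] | /eqP->] | /eqP->].
- case: (boolP (e \in F1)) => eF; first exact/hitr/myb.
  exact/hitl/mya.
- case: (boolP (e \in F1)) => eF; first exact/hitr/myc.
  exact/hitl/mya.
- exact/hitr/mw1.
- exact/hitr/mw2.
- exact/hitl/mw1.
- exact/hitl/mw2.
Qed.


Let cmp := comp (Gp_V E) Fc.

Lemma fz e u : e \in F1 -> u \in e -> [set gz u; gyc e] \in Fc.
Proof.
move=> eF ue; rewrite /Fc; apply/setUP; left; apply/setUP; left.
by apply/bigcupP; exists e => //; apply/imsetP; exists u.
Qed.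
Lemma fb1 e : e \in F1 -> [set gyb e; gw1 e] \in Fc.
Proof. by move=> eF; rewrite /Fc; apply/setUP; left; apply/setUP; right; apply/imsetP; exists e. Qed.
Lemma fb2 e : e \in F1 -> [set gyb e; gw2 e] \in Fc.
Proof. by move=> eF; rewrite /Fc; apply/setUP; right; apply/imsetP; exists e. Qed.

Definition A1 := (fun u => cmp (gz u)) @: [set: T].
Definition A2 := cmp @: ((@gw1 T) @: E).
Definition A3 := cmp @: ((@gw2 T) @: (E :\: F1)).
Definition A4 := cmp @: ((@gya T) @: (E :\: F1)).

Lemma img_sub : cmp @: S0 \subset A1 :|: A2 :|: A3 :|: A4.
Proof.
have i1 : forall u, cmp (gz u) \in A1 :|: A2 :|: A3 :|: A4.
  by move=> u; apply/setUP; left; apply/setUP; left; apply/setUP; left; apply/imsetP; exists u.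
have i2 : forall e, e \in E -> cmp (gw1 e) \in A1 :|: A2 :|: A3 :|: A4.
  move=> e eE; apply/setUP; left; apply/setUP; left; apply/setUP; right.
  by apply/imsetP; exists (gw1 e) => //; apply/imsetP; exists e.
have i3 : forall e, e \in E :\: F1 -> cmp (gw2 e) \in A1 :|: A2 :|: A3 :|: A4.
  move=> e eE; apply/setUP; left; apply/setUP; right.
  by apply/imsetP; exists (gw2 e) => //; apply/imsetP; exists e.
have i4 : forall e, e \in E :\: F1 -> cmp (gya e) \in A1 :|: A2 :|: A3 :|: A4.
  move=> e eE; apply/setUP; right.
  by apply/imsetP; exists (gya e) => //; apply/imsetP; exists e.
apply/subsetP => x /imsetP [y yS0 ->].
case/setUP: yS0 => [/setUP [/setUP [/setUP [/setUP [H|H]|H]|H]|H]|H]; case/imsetP: H => e He ->.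
- exact: i1.
- exact: i2.
- case: (boolP (e \in F1)) => eF.
    by rewrite /cmp -(comp_adj _ (fb2 eF)) (comp_adj _ (fb1 eF)); apply: i2; apply: (subsetP sF1).
  by apply: i3; rewrite inE eF.
- exact: i4.
- by rewrite /cmp (comp_adj _ (fb1 He)); apply: i2; apply: (subsetP sF1).
- have /eqP/cards2P [u [v [_ De]]] := HE (subsetP sF1 _ He).
  have ue : u \in e by rewrite De set21.
  by rewrite /cmp -(comp_adj _ (fz He ue)); apply: i1.
Qed.

Lemma img_bound : #|cmp @: S0| + 3 * #|F1| <= #|T| + 3 * #|E|.
Proof.
have B1 : #|A1| + #|F1| <= #|T|.
  apply: (forest_count (fun e eF => HE (subsetP sF1 _ eF)) aF1) => u v uvF.
  by rewrite /= /cmp (comp_adj _ (fz uvF (set21 u v))) (comp_adj _ (fz uvF (set22 u v))).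
have B2 : #|A2| <= #|E| by apply: leq_trans (leq_imset_card _ _) (leq_imset_card _ _).
have B3 : #|A3| <= #|E :\: F1| by apply: leq_trans (leq_imset_card _ _) (leq_imset_card _ _).
have B4 : #|A4| <= #|E :\: F1| by apply: leq_trans (leq_imset_card _ _) (leq_imset_card _ _).
have B5 : #|E :\: F1| = #|E| - #|F1| by rewrite cardsDS.
have B6 : #|F1| <= #|E| by apply: subset_leq_card.
have B7 := subset_leq_card img_sub.
have B8 := leq_trans (cardU_le _ _) (leq_add (leq_trans (cardU_le _ _) (leq_add (cardU_le A1 A2) (leqnn #|A3|))) (leqnn #|A4|)).
have := leq_trans B7 B8.
lia.
Qed.

End Main.

Unset Implicit Arguments.
Set Strict Implicit.

Theorem lemma7 (T : finType) (E : {set {set T}}) (l : nat)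
  (HE : forall e, e \in E -> #|e| = 2) :
  edge_induced_forest E l ->
  contraction_vc (Gp_V E) (Gp_E E) (4 * l) (3 * l).
Proof.
case=> F [sFE lF Hf].
have aF := forest_acyc sFE Hf.
case: (ex_subset_card lF) => F1 [sF1F cF1].
have sF1 : F1 \subset E := subset_trans sF1F sFE.
have aF1 := acyc_sub sF1F aF.
exists (Fc F1); split.
- exact: Fc_sub sF1.
- by rewrite -cF1; exact: Fc_card HE sF1.
- have H1 := vcGp E.
  have H2 := vc_le (contr_cover (Fc F1) (S0_cover sF1)).
  have H3 := img_bound HE sF1 aF1.
  rewrite cF1 in H3.
  apply: leq_trans (leq_add H2 (leqnn _)) _.
  by apply: leq_trans H3 H1.
Qed.
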